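(* Assume the general coarsening setting described in the context. Let $\mathbf{1}$ denote the path identically equal to $1$, i.e. $\{R=\mathbf{1}\}=\{R_t=1 \text{ for all } t\ge 0\}$. Then the mechanism leading to incomplete data is ignorable on $\mathbf{1}$: for all $\theta\in\Theta$ and every $\psi_0\in\Psi$, $$\mathcal{L}^{(\theta,\psi_0)/(\theta_0,\psi_0)}_{\mathcal{O}}=\mathcal{L}^{\theta/\theta_0}_{\mathcal{X}}\quad\text{a.s. on } \{R_t=1,\ t\ge 0\}.$$
   Context: Setting (general coarsening model for processes). On a measurable space $(\Omega,\mathcal{F})$ live two càdlàg stochastic processes: $X=(X_t)_{t\ge0}$ with values in $\mathbb{R}^d$ (path space a Skorohod space with its Borel $\sigma$-field) and a response indicator process $R=(R_t)_{t\ge0}$ with values in $\{0,1\}$ (componentwise if multivariate), $R_t=1$ meaning that $X_t$ is observed. Let $\mathcal{X}=\sigma(X_t,t\ge0)$, $\mathcal{R}=\sigma(R_t,t\ge0)$ and $\mathcal{F}=\mathcal{X}\vee\mathcal{R}$. A model is a family $\{P_{(\theta,\psi)}:(\theta,\psi)\in\Theta\times\Psi\}$ of mutually equivalent probability measures on $\mathcal{F}$ (parameter spaces possibly infinite-dimensional), with reference measure $P_{(\theta_0,\psi_0)}$; the restriction of $P_{(\theta,\psi)}$ to $\mathcal{X}$ depends only on $\theta$ and is denoted $P_\theta$. Non-informativeness is assumed: $P_{(\theta_1,\psi)}(A\mid\mathcal{X})=P_{(\theta_2,\psi)}(A\mid\mathcal{X})$ a.s. for all $A\in\mathcal{R}$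 and all $\theta_1,\theta_2,\psi$. For a sub-$\sigma$-field $\mathcal{G}$, $\mathcal{L}^{(\theta,\psi)/(\theta_0,\psi_0)}_{\mathcal{G}}$ denotes the Radon–Nikodym derivative of $P_{(\theta,\psi)}$ with respect to $P_{(\theta_0,\psi_0)}$ restricted to $\mathcal{G}$; for $\mathcal{G}\subset\mathcal{X}$ it depends only on $\theta,\theta_0$ and is written $\mathcal{L}^{\theta/\theta_0}_{\mathcal{G}}$. The observed $\sigma$-field is $\mathcal{O}=\sigma(R_tX_t,R_t,\ t\ge0)$. For a deterministic path $r=(r_t)$, $\{R=r\}=\{R_t=r_t\ \forall t\ge0\}$ and $\mathcal{X}^r=\sigma(r_tX_t,\ t\ge0)$. The mechanism is called ignorable on $r$ if $\mathcal{L}^{(\theta,\psi_0)/(\theta_0,\psi_0)}_{\mathcal{O}}=\mathcal{L}^{\theta/\theta_0}_{\mathcal{X}^r}$ a.s. on $\{R=r\}$ for all $\theta$, whatever $\psi_0$. *)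

(* Defs.v *)
From HB Require Import structures.
From mathcomp Require Import all_boot all_order all_algebra.
From mathcomp Require Import all_classical all_reals all_analysis.
Set Implicit Arguments. Unset Strict Implicit. Unset Printing Implicit Defensive.
Import Order.TTheory GRing.Theory Num.Theory.
Import numFieldNormedType.Exports.
Local Open Scope classical_set_scope.
Local Open Scope ring_scope.

Definition sigma_gen (T : Type) (G : set (set T)) : set (set T) := <<s G >>.

Definition gmeasurable (T : Type) (R : realType) (G : set (set T)) (f : T -> R) :=
  forall B : set R, measurable B -> G (f @^-1` B).

Definition cadlag (R : realType) (f : R -> R) : Prop :=
  forall t : R, 0 <= t ->
    (f x @[x --> t^'+] --> f t) /\ (0 < t -> cvg (f x @[x --> t^'-])).

(* X = sigma(X_t, t >= 0), X_t = (X t i)_{i < dim} with values in R^dim *)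
Definition sigmaX (T : Type) (R : realType) (dim : nat)
  (X : R -> 'I_dim -> T -> R) : set (set T) :=
  sigma_gen [set A | exists t i (B : set R),
                     0 <= t /\ measurable B /\ A = X t i @^-1` B].

(* R = sigma(R_t, t >= 0), R_t = (R t i)_{i < dim} with values in {0,1}^dim *)
Definition sigmaR (T : Type) (R : realType) (dim : nat)
  (Rp : R -> 'I_dim -> T -> bool) : set (set T) :=
  sigma_gen [set A | exists t i (B : set bool),
                     0 <= t /\ A = Rp t i @^-1` B].

Definition sigmaF (T : Type) (R : realType) (dim : nat)
  (X : R -> 'I_dim -> T -> R) (Rp : R -> 'I_dim -> T -> bool) : set (set T) :=
  sigma_gen (sigmaX X `|` sigmaR Rp).

(* the observed sigma-field O = sigma(R_t X_t, R_t, t >= 0)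
   (R_t X_t is the componentwise product) *)
Definition sigmaO (T : Type) (R : realType) (dim : nat)
  (X : R -> 'I_dim -> T -> R) (Rp : R -> 'I_dim -> T -> bool) : set (set T) :=
  sigma_gen ([set A | exists t i (B : set R), 0 <= t /\ measurable B /\
                  A = (fun w => if Rp t i w then X t i w else 0) @^-1` B]
             `|` [set A | exists t i (B : set bool),
                     0 <= t /\ A = Rp t i @^-1` B]).

Definition is_RN_deriv d (T : measurableType d) (R : realType)
  (G : set (set T)) (mu nu : {measure set T -> \bar R}) (f : T -> R) : Prop :=
  gmeasurable G f /\
  forall A, G A -> mu A = (\int[nu]_(x in A) (f x)%:E)%E.

Definition is_cond_prob d (T : measurableType d) (R : realType)
  (G : set (set T)) (P : {measure set T -> \bar R}) (A : set T) (h : T -> R) : Prop :=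
  gmeasurable G h /\
  forall B, G B -> P (A `&` B) = (\int[P]_(x in B) (h x)%:E)%E.

(* Main.v *)
Require Import Defs.
From HB Require Import structures.
From mathcomp Require Import all_boot all_order all_algebra.
From mathcomp Require Import all_classical all_reals all_analysis.
From mathcomp Require Import measurable_realfun lebesgue_measure.
From mathcomp Require Import lra.
Import Order.TTheory GRing.Theory Num.Theory.
Import numFieldNormedType.Exports.
Local Open Scope classical_set_scope.
Local Open Scope ring_scope.

Section pf.
Local Open Scope ereal_scope.
Context d d' (T : measurableType d) (T' : measurableType d') (R : realType).
Variables (m : {finite_measure set T -> \bar R}) (phi : {mfun T >-> T'}).
Definition pf : set T' -> \bar R := pushforward m phi.
Let mphi : measurable_fun setT phi := measurable_funPT phi.
Let pf0 : pf set0 = 0. Proof. by rewrite /pf /pushforward preimage_set0 measure0. Qed.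
Let pf_ge0 A : 0 <= pf A. Proof. exact: measure_ge0. Qed.
Let pf_sa : semi_sigma_additive pf.
Proof.
move=> F mF tF mUF; rewrite /pf /pushforward preimage_bigcup.
apply: measure_semi_sigma_additive.
- by move=> n; rewrite -[X in measurable X]setTI; exact: mphi.
- apply/trivIsetP => /= i j _ _ ij; rewrite -preimage_setI.
  by move/trivIsetP : tF => /(_ _ _ _ _ ij) ->//; rewrite preimage_set0.
- by rewrite -preimage_bigcup -[X in measurable X]setTI; exact: mphi.
Qed.
HB.instance Definition _ := isMeasure.Build _ _ _ pf pf0 pf_ge0 pf_sa.
Let pf_fin : fin_num_fun pf.
Proof.
move=> A mA; apply: fin_num_measure.
by rewrite -[X in measurable X]setTI; exact: mphi.
Qed.
HB.instance Definition _ := Measure_isFinite.Build _ _ _ pf pf_fin.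

Lemma pf_ae (Q : T' -> Prop) : {ae pf, forall y, Q y} -> {ae m, forall x, Q (phi x)}.
Proof.
case=> N [mN N0 sN]; exists (phi @^-1` N); split.
- by rewrite -[X in measurable X]setTI; exact: mphi.
- exact: N0.
- by move=> x /= nQ; apply: sN.
Qed.

Lemma pf_integral D (f : T' -> \bar R) : measurable D -> measurable_fun D f ->
  \int[pf]_(y in D) f y = \int[m]_(x in phi @^-1` D) (f \o phi) x.
Proof.
move=> mD mf; rewrite integralE [RHS]integralE.
rewrite /pf !ge0_integral_pushforward//.
- by rewrite [in RHS]funepos_comp [in RHS]funeneg_comp.
- by apply: measurable_funeneg.
- by apply: measurable_funepos.
Qed.
End pf.
Arguments pf {d d' T T' R} m phi.
Arguments pf_ae {d d' T T' R m phi Q}.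

Section idm.
Context d (T : measurableType d) (G : set (set T)).
Hypothesis hG : forall A, G A -> measurable A.
Lemma sub_meas : forall A, <<s G >> A -> measurable A.
Proof. move=> A; apply: smallest_sub => //; exact: sigma_algebra_measurable. Qed.
Lemma mid : measurable_fun setT (id : T -> g_sigma_algebraType G).
Proof. by move=> _ B mB; rewrite setTI; exact: sub_meas. Qed.
Definition idm : {mfun T >-> g_sigma_algebraType G} :=
  HB.pack (id : T -> g_sigma_algebraType G) (isMeasurableFun.Build _ _ _ _ _ mid).
End idm.
Arguments idm {d T G} hG.
Arguments sub_meas {d T G} hG A.
Section mrestr_int.
Local Open Scope ereal_scope.
Context d (T : measurableType d) (R : realType).

Lemma dom_le (nu : {measure set T -> \bar R}) (mu : {measure set T -> \bar R}) :
  (forall A, measurable A -> nu A <= mu A) -> nu `<< mu.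
Proof.
move=> le N muN A mA AN; apply/eqP; rewrite eq_le measure_ge0 andbT.
by rewrite -(muN A mA AN) le.
Qed.

Variables (P : probability T R) (S : set T) (mS : measurable S).

Lemma integral_mrestr_ge0 (A : set T) (phi : T -> \bar R) :
  measurable A -> measurable_fun setT phi -> (forall x, 0 <= phi x) ->
  \int[mrestr P mS]_(x in A) phi x = \int[P]_(x in A `&` S) phi x.
Proof.
move=> mA mphi phi0.
have rP : mrestr P mS `<< P.
  apply: dom_le => B mB; rewrite /mrestr; apply: le_measure; [rewrite inE; exact: measurableI|by rewrite inE|exact: subIsetl].
rewrite -(Radon_Nikodym_SigmaFinite.change_of_variables rP phi0 mA); last first.
  exact: measurable_funTS.
rewrite integral_mkcondr.
have hae : ae_eq P setT (Radon_Nikodym_SigmaFinite.f (mrestr P mS) P)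
    (fun x => (\1_S x)%:E).
  apply: integral_ae_eq => //.
  - exact: Radon_Nikodym_SigmaFinite.f_integrable.
  - apply/measurable_EFinP; exact: measurable_indic.
  - move=> E _ mE; rewrite -Radon_Nikodym_SigmaFinite.f_integral//.
    by rewrite integral_indic// /mrestr setIC.
apply: ae_eq_integral => //.
- apply: measurable_funTS; apply: emeasurable_funM => //.
  apply: measurable_int; exact: Radon_Nikodym_SigmaFinite.f_integrable.
- apply: measurable_funTS; apply/(measurable_restrictT _ mS).
  exact: measurable_funTS.
- apply: filterS hae => x /(_ I) -> _.
  rewrite /patch indicE; case: ifPn => xS; by rewrite ?mule1 ?mule0.
Qed.
End mrestr_int.
Arguments dom_le {d T R} nu mu.
Section Main.
Variables (R : realType) (d : measure_display) (Omega : measurableType d) (dim : nat)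
  (X : R -> 'I_dim -> Omega -> R) (Rp : R -> 'I_dim -> Omega -> bool).
Hypothesis hXm : forall t i, 0 <= t -> measurable_fun setT (X t i).
Hypothesis hRm : forall t i, 0 <= t -> measurable [set w | Rp t i w].
Hypothesis hRc : forall i w, cadlag (fun t => ((Rp t i w : nat)%:R : R)).

Definition GX := [set A | exists t i (B : set R),
                     0 <= t /\ measurable B /\ A = X t i @^-1` B].
Definition GR := [set A : set Omega | exists t i (B : set bool),
                     0 <= t /\ A = Rp t i @^-1` B].
Definition GY := [set A | exists t i (B : set R), 0 <= t /\ measurable B /\
                  A = (fun w => if Rp t i w then X t i w else 0) @^-1` B].
Definition GO := GY `|` GR.

Lemma GX_meas A : GX A -> measurable A.
Proof.
case=> t [i [B [t0 [mB ->]]]]; rewrite -[X in measurable X]setTI.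
exact: hXm.
Qed.

Lemma Rpre_eq t i (B : set bool) : Rp t i @^-1` B =
  ([set w | Rp t i w] `&` [set _ | B true]) `|`
  (~` [set w | Rp t i w] `&` [set _ | B false]).
Proof.
apply/seteqP; split => w /=.
- by case: (Rp t i w) => Bw; [left|right].
- by case: (Rp t i w) => /= -[[? ?]|[H ?]] //; exfalso; exact: H.
Qed.

Lemma cst_meas (Q : Prop) : measurable [set _ : Omega | Q].
Proof.
case: (pselect Q) => q.
- by rewrite (_ : [set _ | Q] = setT) //; apply/seteqP; split.
- by rewrite (_ : [set _ | Q] = set0) //; apply/seteqP; split.
Qed.

Lemma GR_meas A : GR A -> measurable A.
Proof.
case=> t [i [B [t0 ->]]]; rewrite Rpre_eq.
apply: measurableU; apply: measurableI.
- exact: hRm.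
- exact: cst_meas.
- apply: measurableC; exact: hRm.
- exact: cst_meas.
Qed.

Lemma GY_meas A : GY A -> measurable A.
Proof.
case=> t [i [B [t0 [mB ->]]]].
rewrite (_ : _ @^-1` _ = ([set w | Rp t i w] `&` X t i @^-1` B) `|`
  (~` [set w | Rp t i w] `&` [set _ | B 0])); last first.
  apply/seteqP; split => w /=.
  - by case: (Rp t i w) => Bw; [left|right].
  - by case: (Rp t i w) => /= -[[? ?]|[H ?]] //; exfalso; exact: H.
apply: measurableU; apply: measurableI.
- exact: hRm.
- by rewrite -[X in measurable X]setTI; exact: hXm.
- apply: measurableC; exact: hRm.
- exact: cst_meas.
Qed.

Lemma GO_meas A : GO A -> measurable A.
Proof. by case; [exact: GY_meas|exact: GR_meas]. Qed.

Definition S := [set w : Omega | forall t i, 0 <= t -> Rp t i w = true].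

Definition Sn (n : nat) : set Omega :=
  match @unpickle (rat * 'I_dim)%type n with
  | Some (q, i) => [set w | (0 : R) <= ratr q -> Rp (ratr q) i w = true]
  | None => setT
  end.

Lemma SE : S = \bigcap_n Sn n.
Proof.
apply/seteqP; split => w.
- move=> Sw n _; rewrite /Sn; case: unpickle => [[q i]|] //= q0.
  exact: Sw.
- move=> Hw t i t0; apply/negP => /negP; rewrite -eqbF_neg => /eqP Rf.
  have [h1 _] := hRc i w t t0.
  have := cvgr_dist_lt _ _ h1 _ (@ltr01 R).
  rewrite Rf /=.
  have FF : Filter t^'+ by typeclasses eauto.
  move=> /(_ FF) [e /= e0 He].
  have [q] := @rat_in_itvoo R t (t + e) ltac:(lra).
  rewrite in_itv /= => /andP[tq qe].
  have := Hw (pickle (q, i)) I; rewrite /Sn pickleK => /(_ (le_trans t0 (ltW tq))) Rq.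
  have := He (ratr q); rewrite Rq /= sub0r normrN normr1 ltxx.
  move=> H; suff : false by []; apply: H => //.
  rewrite ltr_norml; apply/andP; split; lra.
Qed.
Local Notation OX := (g_sigma_algebraType GX).
Local Notation OO := (g_sigma_algebraType GO).

Lemma Sn_gen (G : set (set Omega)) : GR `<=` G ->
  forall n, <<s G >> (Sn n).
Proof.
move=> hG n; rewrite /Sn; case: unpickle => [[q i]|]; last first.
  exact: (@measurableT _ (g_sigma_algebraType G)).
case: (leP (0 : R) (ratr q)) => q0.
- apply: sub_sigma_algebra; apply: hG; exists (ratr q), i, [set true]; split => //.
  by apply/seteqP; split => w /=; [move=> /(_ isT)|move=> ->].
- rewrite (_ : [set w | _] = setT); first exact: (@measurableT _ (g_sigma_algebraType G)).
  by apply/seteqP; split.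
Qed.

Lemma S_gen (G : set (set Omega)) : GR `<=` G -> <<s G >> S.
Proof.
move=> hG; rewrite SE.
have H := (@bigcapT_measurable _ (g_sigma_algebraType G) Sn (@Sn_gen G hG)).
exact H.
Qed.

Lemma S_R : sigmaR Rp S.
Proof. exact: S_gen. Qed.

Lemma S_O : <<s GO >> S.
Proof. by apply: S_gen => A hA; right. Qed.

Lemma S_meas : measurable S.
Proof. exact: (@sub_meas _ _ _ GO_meas S S_O). Qed.

Lemma T1 A : sigmaX X A -> <<s GO >> (A `&` S).
Proof.
pose C := [set A : set Omega | @measurable _ OO (A `&` S)].
have sC : sigma_algebra setT C.
  split.
  - by rewrite /C /= set0I; exact: (@measurable0 _ OO).
  - move=> B; rewrite /C /= => hB.
    rewrite (_ : (setT `\` B) `&` S = S `\` (B `&` S)).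
      exact: (@measurableD _ OO) S_O hB.
    by apply/seteqP; split => w /=; [case=> -[_ nB] Sw; split => // -[]|case=> Sw nB; split => //; split => // Bw; apply: nB].
  - move=> F hF; rewrite /C /= setI_bigcupl.
    exact: (@bigcupT_measurable _ OO).
move=> hA; apply: (smallest_sub sC _ hA).
move=> B [t [i [B' [t0 [mB' ->]]]]]; rewrite /C /=.
rewrite (_ : X t i @^-1` B' `&` S =
  (fun w => if Rp t i w then X t i w else 0) @^-1` B' `&` S).
  apply: (@measurableI _ OO) S_O; apply: sub_sigma_algebra; left.
  by exists t, i, B'.
apply/seteqP; split => w /= [Bw Sw]; split => //; by rewrite Sw in Bw *.
Qed.

Lemma T2 A : <<s GO >> A -> exists A', sigmaX X A' /\ A `&` S = A' `&` S.
Proof.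
pose C := [set A : set Omega | exists A', sigmaX X A' /\ A `&` S = A' `&` S].
have sC : sigma_algebra setT C.
  split.
  - by exists set0; split => //; exact: (@measurable0 _ OX).
  - move=> B [B' [mB' BB']]; exists (setT `\` B'); split.
      exact: (@measurableD _ OX) (@measurableT _ OX) mB'.
    apply/seteqP; split => w /= [[_ nB] Sw]; split => //; split => // hB.
    + have : (B' `&` S) w by [].
      by rewrite -BB' => -[]. 
    + have : (B `&` S) w by [].
      by rewrite BB' => -[].
  - move=> F hF; have [G hG] := choice hF.
    exists (\bigcup_k G k); split.
      exact: (@bigcupT_measurable _ OX) (fun k => (hG k).1).
    by rewrite !setI_bigcupl; apply: eq_bigcupr => k _; exact: (hG k).2.
move=> hA; apply: (smallest_sub sC _ hA).
move=> B [[t [i [B' [t0 [mB' ->]]]]]|[t [i [B' [t0 ->]]]]].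
- exists (X t i @^-1` B'); split.
    by apply: sub_sigma_algebra; exists t, i, B'.
  apply/seteqP; split => w /= [Bw Sw]; split => //; by rewrite Sw in Bw *.
- exists [set _ | B' true]; split.
    case: (pselect (B' true)) => b.
    + rewrite (_ : [set _ | _] = setT); first exact: (@measurableT _ OX).
      by apply/seteqP; split.
    + rewrite (_ : [set _ | _] = set0); first exact: (@measurable0 _ OX).
      by apply/seteqP; split.
  apply/seteqP; split => w /= [Bw Sw]; split => //; by rewrite Sw in Bw *.
Qed.
Variables (Theta Psi : Type) (P : Theta -> Psi -> probability Omega R)
  (theta0 : Theta).
Hypothesis hequiv : forall th1 ps1 th2 ps2 A, sigmaF X Rp A ->
      (P th1 ps1 A = 0%E <-> P th2 ps2 A = 0%E).
Hypothesis hnoninf : forall A, sigmaR Rp A -> forall th1 th2 ps (h1 h2 : Omega -> R),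
      is_cond_prob (sigmaX X) (P th1 ps) A h1 ->
      is_cond_prob (sigmaX X) (P th2 ps) A h2 ->
      {ae P th1 ps, forall w, h1 w = h2 w}.

Local Notation PX := (idm GX_meas).
Local Notation PO := (idm GO_meas).
Local Notation muX Q := (pf Q PX).
Local Notation nuX Q := (pf (mrestr Q S_meas) PX).
Local Notation RNf := Radon_Nikodym_SigmaFinite.f.

Lemma X_meas A : sigmaX X A -> measurable A.
Proof. move=> hA; exact (sub_meas GX_meas A hA). Qed.

Lemma X_F A : sigmaX X A -> sigmaF X Rp A.
Proof. by move=> hA; apply: sub_sigma_algebra; left. Qed.

Lemma OX_Omega (h : Omega -> \bar R) :
  measurable_fun (T:=OX) setT h -> measurable_fun setT h.
Proof.
move=> mh _ B mB; rewrite setTI; apply: X_meas.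
by have := mh measurableT B mB; rewrite setTI.
Qed.

Lemma mfineE d' (T : measurableType d') (k : T -> \bar R) :
  measurable_fun setT k -> measurable_fun setT (fun x => (fine (k x))%:E).
Proof. by move=> mk; apply/measurable_EFinP; apply: measurableT_comp. Qed.

Lemma nu_mu (Q : probability Omega R) : nuX Q `<< muX Q.
Proof.
apply: dom_le => A mA; rewrite /pf /pushforward /mrestr /=.
apply: le_measure; rewrite ?inE.
- exact (measurableI _ _ (X_meas _ mA) S_meas).
- exact (X_meas _ mA).
- exact: subIsetl.
Qed.

Lemma condP (Q : probability Omega R) :
  is_cond_prob (sigmaX X) Q S (fun w => fine (RNf (nuX Q) (muX Q) w)).
Proof.
have numu := nu_mu Q.
have mk : measurable_fun (T:=OX) setT (RNf (nuX Q) (muX Q)).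
  exact: measurable_int (Radon_Nikodym_SigmaFinite.f_integrable numu).
split.
- move=> B mB.
  have : measurable_fun (T:=OX) setT (fun w => fine (RNf (nuX Q) (muX Q) w)).
    exact: measurableT_comp.
  by move/(_ measurableT B mB); rewrite setTI.
- move=> B hB.
  transitivity (nuX Q B); first by rewrite /pf /pushforward /mrestr /= setIC.
  rewrite (Radon_Nikodym_SigmaFinite.f_integral numu) //.
  rewrite pf_integral//; last exact: measurable_funTS.
  apply: eq_integral => x _ /=; rewrite fineK //.
  exact: Radon_Nikodym_SigmaFinite.f_fin_num.
Qed.

Lemma mu_dom th ps th' ps' : muX (P th ps) `<< muX (P th' ps').
Proof.
move=> N N0 A mA AN; have := N0 A mA AN; rewrite /pf /pushforward /=.
by move/(hequiv th' ps' th ps _ (X_F _ mA)).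
Qed.
Variables (theta : Theta) (psi0 : Psi).
Local Notation Pt := (P theta psi0).
Local Notation P0 := (P theta0 psi0).
Local Notation kg := (RNf (muX Pt) (muX P0)).

Lemma G1 A : sigmaX X A ->
  (Pt (A `&` S) = \int[P0]_(x in A `&` S) kg x)%E.
Proof.
move=> hA.
have mA : measurable A := X_meas _ hA.
have mAX : @measurable _ OX A := hA.
have hcondt := condP Pt.
have hcond0 := condP P0.
have hae := hnoninf _ S_R _ _ _ _ _ hcondt hcond0.
have dom := mu_dom theta psi0 theta0 psi0.
have numu0 := nu_mu P0.
have numut := nu_mu Pt.
have mk0 : measurable_fun (T:=OX) setT (RNf (nuX P0) (muX P0)).
  exact: measurable_int (Radon_Nikodym_SigmaFinite.f_integrable numu0).
have mkt : measurable_fun (T:=OX) setT (RNf (nuX Pt) (muX Pt)).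
  exact: measurable_int (Radon_Nikodym_SigmaFinite.f_integrable numut).
have mkg : measurable_fun (T:=OX) setT kg.
  exact: measurable_int (Radon_Nikodym_SigmaFinite.f_integrable dom).
transitivity (Pt (S `&` A)); first by rewrite setIC.
rewrite (hcondt.2 A hA).
transitivity ((\int[Pt]_(x in A) (fine (RNf (nuX P0) (muX P0) x))%:E))%E.
  apply: ae_eq_integral => //.
  - apply: measurable_funTS; apply: OX_Omega; exact: mfineE.
  - apply: measurable_funTS; apply: OX_Omega; exact: mfineE.
  - by apply: filterS hae => x -> _.
transitivity ((\int[muX Pt]_(x in A) (fine (RNf (nuX P0) (muX P0) x))%:E))%E.
  by rewrite pf_integral//; apply: measurable_funTS; exact: mfineE.
rewrite -(Radon_Nikodym_SigmaFinite.change_of_variables dom _ mAX); last 2 first.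
- move=> x; rewrite lee_fin; apply: fine_ge0.
  exact: Radon_Nikodym_SigmaFinite.f_ge0.
- apply: measurable_funTS; exact: mfineE.
transitivity ((\int[muX P0]_(x in A) (kg x * RNf (nuX P0) (muX P0) x)))%E.
  apply: eq_integral => x _; rewrite fineK; first exact: muleC.
  exact: Radon_Nikodym_SigmaFinite.f_fin_num.
rewrite (Radon_Nikodym_SigmaFinite.change_of_variables numu0 _ mAX); last 2 first.
- exact: (Radon_Nikodym_SigmaFinite.f_ge0 dom).
- exact: measurable_funTS.
rewrite pf_integral//; last exact: measurable_funTS.
rewrite integral_mrestr_ge0 //.
- exact: OX_Omega.
- by move=> x; exact: (Radon_Nikodym_SigmaFinite.f_ge0 dom).
Qed.
Lemma main_sec (f g : Omega -> R) :
    is_RN_deriv (sigmaO X Rp) Pt P0 f ->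
    is_RN_deriv (sigmaX X) Pt P0 g ->
    {ae P0, forall w,
        (forall t i, 0 <= t -> Rp t i w = true) -> f w = g w}.
Proof.
move=> [fm fE] [gm gE].
have dom := mu_dom theta psi0 theta0 psi0.
have kint : (muX P0).-integrable setT kg.
  exact: Radon_Nikodym_SigmaFinite.f_integrable dom.
have kmX : measurable_fun (T:=OX) setT kg := measurable_int _ kint.
have k0 x : (0 <= kg x)%E := Radon_Nikodym_SigmaFinite.f_ge0 dom x.
have gmX : measurable_fun (T:=OX) setT (fun x => (g x)%:E).
  by apply/measurable_EFinP => _ B mB; rewrite setTI; exact: gm.
have ha : ae_eq (muX P0) setT kg (fun x => (g x)%:E).
  apply: integral_ae_eq => // E _ mE.
  rewrite -(Radon_Nikodym_SigmaFinite.f_integral dom) //.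
  rewrite pf_integral //; last exact: measurable_funTS.
  rewrite /pf /pushforward /=.
  exact: gE.
have ha' := pf_ae ha.
have SO : @measurable _ OO S := S_O.
have G1m : measurable_fun (T:=OO) setT (kg \_ S).
  apply/(measurable_restrictT _ SO) => _ B mB.
  rewrite setIC; apply: T1.
  by have := kmX measurableT B mB; rewrite setTI.
have F1m : measurable_fun (T:=OO) setT ((fun x => (f x)%:E) \_ S).
  apply/(measurable_restrictT _ SO); apply: measurable_funTS.
  by apply/measurable_EFinP => _ B mB; rewrite setTI; exact: fm.
have hb : ae_eq (pf P0 PO) setT (kg \_ S) ((fun x => (f x)%:E) \_ S).
  apply: integral_ae_eq => //.
  - apply/integrableP; split => //.
    rewrite pf_integral //; last first.
      by apply: measurableT_comp => //.
    rewrite (eq_integral (kg \_ S)); last first.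
      move=> x _ /=; rewrite gee0_abs // /patch; case: ifP => _ //.
    rewrite -integral_mkcondr -(G1 (PO @^-1` setT)); last exact (@measurableT _ OX).
    rewrite ltey_eq fin_num_measure //; exact (measurableI _ _ measurableT S_meas).
  - move=> E _ mE.
    rewrite !pf_integral //; try exact: measurable_funTS.
    have hES : @measurable _ OO (E `&` S) := measurableI _ _ mE SO.
    have [A' [hA' EA']] := T2 E mE.
    transitivity (\int[P0]_(x in E `&` S) kg x)%E.
      by rewrite integral_mkcondr.
    transitivity (\int[P0]_(x in E `&` S) (f x)%:E)%E; last first.
      by rewrite integral_mkcondr.
    rewrite -fE; last exact hES.
    by rewrite EA' -(G1 _ hA').
have hb' := pf_ae hb.
apply: filterS2 ha' hb' => w /(_ I) kgw /(_ I) hw Sw.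
have Sw' : w \in S by rewrite inE.
move: hw kgw; rewrite /patch /=.
change (PO w) with w; change (PX w) with w.
by rewrite Sw' => -> [].
Qed.
End Main.

Theorem mainTheorem1
  (R : realType) (d : measure_display) (Omega : measurableType d) (dim : nat)
  (X : R -> 'I_dim -> Omega -> R) (Rp : R -> 'I_dim -> Omega -> bool)
  (Theta Psi : Type) (P : Theta -> Psi -> probability Omega R)
  (theta0 : Theta)
  (* X and R are cadlag processes, measurable on Omega *)
  (hXm : forall t i, 0 <= t -> measurable_fun setT (X t i))
  (hRm : forall t i, 0 <= t -> measurable [set w | Rp t i w])
  (hXc : forall i w, cadlag (fun t => X t i w))
  (hRc : forall i w, cadlag (fun t => ((Rp t i w : nat)%:R : R)))
  (* the P_(theta,psi) are mutually equivalent on F *)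
  (hequiv : forall th1 ps1 th2 ps2 A, sigmaF X Rp A ->
      (P th1 ps1 A = 0%E <-> P th2 ps2 A = 0%E))
  (* the restriction of P_(theta,psi) to X depends only on theta *)
  (hXonly : forall th ps1 ps2 A, sigmaX X A -> P th ps1 A = P th ps2 A)
  (* non-informativeness *)
  (hnoninf : forall A, sigmaR Rp A -> forall th1 th2 ps (h1 h2 : Omega -> R),
      is_cond_prob (sigmaX X) (P th1 ps) A h1 ->
      is_cond_prob (sigmaX X) (P th2 ps) A h2 ->
      {ae P th1 ps, forall w, h1 w = h2 w}) :
  forall (theta : Theta) (psi0 : Psi) (f g : Omega -> R),
    is_RN_deriv (sigmaO X Rp) (P theta psi0) (P theta0 psi0) f ->
    is_RN_deriv (sigmaX X) (P theta psi0) (P theta0 psi0) g ->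
    {ae P theta0 psi0, forall w,
        (forall t i, 0 <= t -> Rp t i w = true) -> f w = g w}.
Proof.
move=> theta psi0 f g hf hg.
exact: (@main_sec _ _ _ _ _ _ hXm hRm hRc _ _ _ _ hequiv hnoninf _ _ _ _ hf hg).
Qed.
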